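(* Let $I=(G,c,F_{\rm in},\mathcal{H},k)$ be a reduced instance of RGBP in which every habitat has at most $6$ vertices and $G$ has maximum degree at most $3$, and let $H\in\mathcal{H}$ with $|H|=6$. If $\{H,H'\}$ is an edge of the basic habitat graph $\mathcal{G}_{G,F_{\rm in},\mathcal{H}}$ for some $H'\in\mathcal{H}$, then $H'\subseteq H$.
   Context: All graphs are finite, simple and undirected. For a graph $G=(V,E)$, $H\subseteq V$ and $F\subseteq E$, let $G[H,F]$ be the graph with vertex set $H$ and edge set $\{\{u,v\}\in F\mid u,v\in H\}$, and $G[H]=G[H,E]$. A graph is 2-connected if it has at least three vertices and remains connected after deleting any single vertex. An instance of RGBP is $(G,c,F_{\rm in},\mathcal{H},k)$ with $G=(V,E)$, costs $c\colon E\to\mathbb{N}_0$, forced edges $F_{\rm in}\subseteq E$, a set $\mathcal{H}$ of subsets of $V$ (habitats) and an integer $k$; the question is whether there is $F$ with $F_{\rm in}\subseteq F\subseteq E$, $\sum_{e\in F}c(e)\leq k$ and $G[H,F]$ 2-connected for all $H\in\mathcal{H}$. The instance is reduced if none of the following rules applies: (1) some $H\in\mathcal{H}$ has $G[H]$ not 2-connected (then answer no); (2) two habitats in $\mathcal{H}$ are equal (delete one); (3) for some habitat $H$ there is an edge $e\in E(G[H])\setminus F_{\rm in}$ such that $G[H]-e$ is not 2-connected (add $e$ to $F_{\rm in}$); (4) some habitat $H$ has $G[H,F_{\rm in}]$ 2-connected (delete $H$); (5) some edge $e\in E$ lies in no $G[H]$, $H\in\mathcal{H}$ (delete $e$, and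 if $e\in F_{\rm in}$ decrease $k$ by $c(e)$). The basic habitat graph $\mathcal{G}_{G,F_{\rm in},\mathcal{H}}$ has vertex set $\mathcal{H}$ and an edge $\{H,H'\}$ whenever $(E(G[H])\cap E(G[H']))\setminus F_{\rm in}\neq\emptyset$. *)

(* Defs.v *)
From mathcomp Require Import all_boot all_algebra.
Set Implicit Arguments. Unset Strict Implicit. Unset Printing Implicit Defensive.

(* A finite simple graph on vertex type T is given by its edge set
   E : {set {set T}}, each edge being a 2-element vertex set. *)
Definition simple_edges (T : finType) (E : {set {set T}}) : Prop :=
  forall e, e \in E -> #|e| = 2.

Definition adjF (T : finType) (S : {set T}) (F : {set {set T}}) : rel T :=
  fun x y => [&& x \in S, y \in S & [set x; y] \in F].

Definition connectedF (T : finType) (S : {set T}) (F : {set {set T}}) : Prop :=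
  forall x y, x \in S -> y \in S -> connect (adjF S F) x y.

Definition two_connected (T : finType) (S : {set T}) (F : {set {set T}}) : Prop :=
  2 < #|S| /\ forall v, v \in S -> connectedF (S :\ v) F.

Definition induced_edges (T : finType) (E : {set {set T}}) (S : {set T}) :=
  [set e in E | e \subset S].

Definition degree (T : finType) (E : {set {set T}}) (v : T) : nat :=
  #|[set e in E | v \in e]|.

(* The instance (G=(T,E), c, Fin, Hs, k) is reduced.  Rule (2) is vacuous
   since Hs is a (finite) set. *)
Definition reduced (T : finType) (E : {set {set T}}) (c : {set T} -> nat)
  (Fin : {set {set T}}) (Hs : {set {set T}}) (k : int) : Prop :=
  [/\ (* (1) *) forall H, H \in Hs -> two_connected H E,
      (* (3) *) forall H e, H \in Hs -> e \in induced_edges E H -> e \notin Fin ->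
                  two_connected H (E :\ e),
      (* (4) *) forall H, H \in Hs -> ~ two_connected H Fin &
      (* (5) *) forall e, e \in E -> exists2 H, H \in Hs & e \subset H].

Definition habitat_adj (T : finType) (E Fin : {set {set T}}) (H H' : {set T}) : Prop :=
  H != H' /\ exists e, [/\ e \in E, e \subset H, e \subset H' & e \notin Fin].

(* Main.v *)
Require Import Defs.
From mathcomp Require Import all_boot all_algebra.
From mathcomp Require Import zify.
Set Implicit Arguments. Unset Strict Implicit. Unset Printing Implicit Defensive.

Section H.
Variable T : finType.
Implicit Types (E F : {set {set T}}) (S K : {set T}).

Definition Nb E (z : T) : {set T} := [set y | [set z; y] \in E].

Lemma N_sym E y z : (y \in Nb E z) = (z \in Nb E y).
Proof. by rewrite !inE setUC. Qed.

Lemma N_irr E z : simple_edges E -> z \notin Nb E z.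
Proof.
move=> sE; rewrite inE setUid; apply/negP => /sE; by rewrite cards1.
Qed.

Lemma N_card E z : simple_edges E -> degree E z <= 3 -> #|Nb E z| <= 3.
Proof.
move=> sE dz.
have inj : {in Nb E z &, injective (fun y => [set z; y])}.
  move=> y1 y2 _ _ eq12.
  have : y1 \in [set z; y2] by rewrite -eq12 !inE eqxx orbT.
  rewrite !inE => /orP [/eqP y1z|/eqP //].
  have : y2 \in [set z; y1] by rewrite eq12 !inE eqxx orbT.
  by rewrite !inE y1z orbb => /eqP ->.
rewrite -(card_in_imset inj); apply: leq_trans dz; apply: subset_leq_card.
apply/subsetP => f /imsetP [y yN ->]; rewrite inE in yN; by rewrite inE yN !inE eqxx.
Qed.

Lemma cross (r : rel T) (A : {set T}) x y :
  connect r x y -> x \in A -> y \notin A -> exists a b, [/\ r a b, a \in A & b \notin A].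
Proof.
move/connectP => [p pth ->] {y}.
elim: p x pth => [|z p IH] x /=; first by move=> _ ->.
move=> /andP [rxz pth] xA lA.
case zA: (z \in A); first exact: IH pth zA lA.
by exists x, z; rewrite rxz xA zA.
Qed.

Lemma attach S F K y0 : two_connected S F -> K \subset S -> 1 < #|K| ->
  y0 \in S -> y0 \notin K ->
  1 < #|[set z in K | [exists y, [&& y \in S, y \notin K & [set z; y] \in F]]]|.
Proof.
move=> [c3 conn] KS cK y0S y0K.
set Att := [set z in K | _].
rewrite ltnNge; apply/negP => small.
have [r rK sub] : exists2 r, r \in K & Att \subset [set r].
  case: (posnP #|Att|) => [/cards0_eq ->| pos].
    have : (0 < #|K|) by lia.
    rewrite card_gt0 => /set0Pn [r rK]; exists r => //; exact: sub0set.
  have /cards1P [p pe] : #|Att| == 1 by apply/eqP; lia.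
  exists p; last by rewrite pe.
  have : p \in Att by rewrite pe set11.
  by rewrite inE => /andP [].
have : 0 < #|K :\ r| by move: cK; rewrite (cardsD1 r K) rK; lia.
rewrite card_gt0 => /set0Pn [z]; rewrite !inE => /andP [zr zK].
have rS : r \in S by apply: (subsetP KS).
have zS : z \in S by apply: (subsetP KS).
have y0r : y0 != r by apply/eqP => e; move: y0K; rewrite e rK.
have := conn r rS z y0; rewrite !inE zr zS y0r y0S => /(_ isT isT) cz.
have [a [b [ab aK bK]]] := cross cz zK y0K.
move: ab; rewrite /adjF !inE => /and3P [/andP [ar aS] /andP [br bS] abF].
have : a \in Att.
  rewrite inE aK /=; apply/existsP; exists b; by rewrite bS bK abF.
move/(subsetP sub); rewrite inE => /eqP ear; by rewrite ear eqxx in ar.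
Qed.

Lemma deg2 S F z : two_connected S F -> z \in S ->
  1 < #|[set y in S | [set z; y] \in F]|.
Proof.
move=> tc zS.
have c3 := tc.1.
have KS : S :\ z \subset S by apply: subsetDl.
have cK : 1 < #|S :\ z| by move: c3; rewrite (cardsD1 z S) zS; lia.
have := attach tc KS cK zS; rewrite !inE eqxx /= => /(_ isT) h.
apply: leq_trans h _; apply: subset_leq_card; apply/subsetP => p.
rewrite !inE => /andP [/andP [pz pS] /existsP [y]].
rewrite !inE => /and3P [yS]; rewrite negb_and negbK yS orbF => /eqP -> pzF.
by rewrite pS setUC.
Qed.

Lemma cardID1 (N S : {set T}) y : y \in S -> #|N :&: S| = (y \in N) + #|N :&: (S :\ y)|.
Proof. move=> yS; by rewrite (cardsD1 y (N :&: S)) inE yS andbT setIDA. Qed.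

Lemma ltn_extra (N K S : {set T}) y : K \subset S -> y \in S -> y \notin K -> y \in N ->
  #|N :&: K| < #|N :&: S|.
Proof.
move=> KS yS yK yN; rewrite (cardID1 _ yS) yN add1n ltnS.
apply: subset_leq_card; apply: setIS; apply/subsetP => t tK.
rewrite !inE (subsetP KS) // andbT; apply/eqP => e; by rewrite -e tK in yK.
Qed.

Lemma card_sumI (A B : {set T}) : #|A :&: B| = \sum_(z in A) (z \in B).
Proof.
rewrite -sum1_card big_mkcond /= [RHS]big_mkcond /=.
apply: eq_bigr => i _; rewrite !inE; by case: (i \in A); case: (i \in B).
Qed.

End H.


Section H2.
Variable T : finType.
Implicit Types (E F : {set {set T}}) (S K : {set T}).

Lemma NS E S z : [set y in S | [set z; y] \in E] = Nb E z :&: S.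
Proof. by apply/setP => y; rewrite !inE andbC. Qed.

Lemma full_nbr E c Fin Hs k S a b : reduced E c Fin Hs k -> S \in Hs ->
  a \in S -> b \in S -> [set a; b] \in E -> [set a; b] \notin Fin ->
  degree E a <= 3 -> simple_edges E ->
  Nb E a \subset S /\ #|Nb E a| = 3.
Proof.
move=> [R1 R3 R4 R5] HS aS bS abE abF da sE.
have ind : [set a; b] \in induced_edges E S.
  by rewrite inE abE subUset !sub1set aS bS.
have := deg2 (R3 S _ HS ind abF) aS => h.
have sub : [set y in S | [set a; y] \in E :\ [set a; b]] \subset (Nb E a :&: S) :\ b.
  apply/subsetP => y; rewrite !inE => /andP [yS /andP [ne yE]].
  rewrite yS yE !andbT; apply/eqP => yb; by rewrite yb eqxx in ne.
have c1 : 1 < #|(Nb E a :&: S) :\ b| := leq_trans h (subset_leq_card sub).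
  clear h sub.
have bN : b \in Nb E a :&: S by rewrite !inE abE bS.
have c2 := cardsD1 b (Nb E a :&: S); rewrite bN /= in c2.
have c3 : #|Nb E a :&: S| <= #|Nb E a| by apply: subset_leq_card; apply: subsetIl.
have c4 := N_card sE da.
have eq : Nb E a :&: S == Nb E a.
  rewrite eqEcard subsetIl /=; clear -c1 c2 c4; lia.
split; last by clear -c1 c2 c3 c4; lia.
by move/eqP: eq => <-; apply: subsetIr.
Qed.

Lemma good_contra E c Fin Hs k S u v : simple_edges E -> reduced E c Fin Hs k ->
  S \in Hs -> u \in S -> v \in S -> [set u; v] \in E -> [set u; v] \notin Fin ->
  (forall y, y \in S -> y != u -> y != v -> #|Nb E y :&: S| <= 2) -> False.
Proof.
move=> sE red HS uS vS eE eF good.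
have [R1 R3 R4 R5] := red.
apply: (R4 S HS).
have eS : [set u; v] \in induced_edges E S by rewrite inE eE subUset !sub1set uS vS.
have tc := R3 S _ HS eS eF.
have key : forall a b, a \in S -> b \in S -> [set a; b] \in E -> a != u -> a != v ->
    [set a; b] \in Fin.
  move=> a b aS bS abE au av; apply/negPn/negP => nF.
  have ind : [set a; b] \in induced_edges E S by rewrite inE abE subUset !sub1set aS bS.
  have := deg2 (R3 S _ HS ind nF) aS => h.
  have sub : [set y in S | [set a; y] \in E :\ [set a; b]] \subset (Nb E a :&: S) :\ b.
    apply/subsetP => y; rewrite !inE => /andP [yS /andP [ne yE]].
    rewrite yS yE !andbT; apply/eqP => yb; by rewrite yb eqxx in ne.
  have c1 : 1 < #|(Nb E a :&: S) :\ b| := leq_trans h (subset_leq_card sub).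
  clear h sub.
  have bN : b \in Nb E a :&: S by rewrite !inE abE bS.
  have c2 := cardsD1 b (Nb E a :&: S); rewrite bN /= in c2.
  have g := good a aS au av; clear -g c1 c2; lia.
have allF : forall a b, a \in S -> b \in S -> [set a; b] \in E -> [set a; b] != [set u; v] ->
    [set a; b] \in Fin.
  move=> a b aS bS abE ne.
  case: (boolP ((a != u) && (a != v))) => [/andP [au av] | ha]; first exact: key.
  case: (boolP ((b != u) && (b != v))) => [/andP [bu bv] | hb].
    by rewrite setUC; apply: key => //; rewrite setUC.
  move: ha hb; rewrite !negb_and !negbK.
  have ab : a != b.
    apply/eqP => e; move: (sE _ abE); by rewrite e setUid cards1.
  move=> /orP [/eqP au|/eqP av] /orP [/eqP bu|/eqP bv]; subst.
  - by rewrite eqxx in ab.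
  - by rewrite eqxx in ne.
  - by rewrite setUC eqxx in ne.
  - by rewrite eqxx in ab.
have [c3 conn] := tc; split => // x xS a b aS bS.
apply: connect_sub (conn x xS a b aS bS) => p q.
rewrite /adjF !inE => /and3P [/andP [px pS] /andP [qx qS] /andP [ne pqE]].
apply: connect1; rewrite /adjF !inE px pS qx qS /=.
exact: allF.
Qed.
End H2.

Unset Implicit Arguments.

Theorem lemma15 (T : finType) (E : {set {set T}}) (c : {set T} -> nat)
  (Fin Hs : {set {set T}}) (k : int) :
  simple_edges E -> Fin \subset E ->
  reduced E c Fin Hs k ->
  (forall H, H \in Hs -> #|H| <= 6) ->
  (forall v, degree E v <= 3) ->
  forall H H', H \in Hs -> H' \in Hs -> #|H| = 6 ->
  habitat_adj E Fin H H' -> H' \subset H.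
Proof.
move=> sE FinE red Hle6 deg3 H H' HH HH' cH [neqHH' [e [eE eH eH' eF]]].
have [R1 R3 R4 R5] := red.
apply/idPn => nsub.
have /cards2P [u [v [uv ee]]] : #|e| == 2 by rewrite sE.
subst e.
have uH : u \in H by apply: (subsetP eH); rewrite !inE eqxx.
have vH : v \in H by apply: (subsetP eH); rewrite !inE eqxx orbT.
have uH' : u \in H' by apply: (subsetP eH'); rewrite !inE eqxx.
have vH' : v \in H' by apply: (subsetP eH'); rewrite !inE eqxx orbT.
have eE' : [set v; u] \in E by rewrite setUC.
have eF' : [set v; u] \notin Fin by rewrite setUC.
have [NuH cu] := full_nbr red HH uH vH eE eF (deg3 u) sE.
have [NuH' _] := full_nbr red HH' uH' vH' eE eF (deg3 u) sE.
have [NvH cv] := full_nbr red HH vH uH eE' eF' (deg3 v) sE.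
have [NvH' _] := full_nbr red HH' vH' uH' eE' eF' (deg3 v) sE.
have Ncard z : #|Nb E z| <= 3 := N_card sE (deg3 z).
set K := H :&: H'.
set R := K :\ u :\ v.
have [x xH' xH] := subsetPn nsub.
have [w wH wH'] : exists2 w, w \in H & w \notin H'.
  apply/subsetPn; apply/negP => sHH'; apply/negP: neqHH'; rewrite negbK.
  by rewrite eqEcard sHH' cH Hle6.
have uK : u \in K by rewrite inE uH uH'.
have vK : v \in K by rewrite inE vH vH'.
have vKu : v \in K :\ u by rewrite in_setD1 vK eq_sym uv.
have cK1 := cardsD1 u K; rewrite uK /= in cK1.
have cK2 := cardsD1 v (K :\ u); rewrite vKu /= in cK2.
have cK5 : #|K| <= 5.
  have : K \subset H :\ w.
    apply/subsetP => t; rewrite !inE => /andP [tH tH']; rewrite tH andbT.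
    by apply/eqP => tw; rewrite -tw tH' in wH'.
  move/subset_leq_card => l1; have := cardsD1 w H; rewrite wH cH /= => l2.
  clear -l1 l2; lia.
have uNu : u \notin Nb E u := N_irr u sE.
have vNv : v \notin Nb E v := N_irr v sE.
have vNu : v \in Nb E u by rewrite inE.
have uNv : u \in Nb E v by rewrite inE setUC.
have KH' : K \subset H' by apply: subsetIr.
have KH : K \subset H by apply: subsetIl.
have c2K : 1 < #|K| by clear -cK1 cK2; lia.
have xK : x \notin K by rewrite inE (negbTE xH).
have wK : w \notin K by rewrite inE (negbTE wH') andbF.
have hA := attach (R1 H' HH') KH' c2K xH' xK.
have hB := attach (R1 H HH) KH c2K wH wK.
set A := [set z in K | _] in hA.
set B := [set z in K | _] in hB.
have AR : A \subset R.
  apply/subsetP => z; rewrite inE => /andP [zK /existsP [y /and3P [yH' yK yE]]].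
  have yH : y \notin H by apply/negP => yH; rewrite inE yH yH' in yK.
  rewrite !in_setD1 zK andbT; apply/andP; split; apply/eqP => zz; subst z.
  - by move: yH; rewrite (subsetP NvH) // inE.
  - by move: yH; rewrite (subsetP NuH) // inE.
have BR : B \subset R.
  apply/subsetP => z; rewrite inE => /andP [zK /existsP [y /and3P [yH yK yE]]].
  have yH' : y \notin H' by apply/negP => yH'; rewrite inE yH yH' in yK.
  rewrite !in_setD1 zK andbT; apply/andP; split; apply/eqP => zz; subst z.
  - by move: yH'; rewrite (subsetP NvH') // inE.
  - by move: yH'; rewrite (subsetP NuH') // inE.
have bound : forall z (bx bw : bool),
    (bx -> exists2 y, y \in H' :\: H & y \in Nb E z) ->
    (bw -> exists2 y, y \in H :\: H' & y \in Nb E z) ->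
    (u \in Nb E z) + (v \in Nb E z) + #|Nb E z :&: R| + bx + bw <= 3.
  move=> z bx bw hx hw.
  have eK : #|Nb E z :&: K| = (u \in Nb E z) + (v \in Nb E z) + #|Nb E z :&: R|.
    by rewrite (cardID1 _ uK) (cardID1 _ vKu) addnA.
  rewrite -eK.
  have cN : #|Nb E z :&: K| <= #|Nb E z| by apply: subset_leq_card; apply: subsetIl.
  have gen : forall S, #|Nb E z :&: S| <= #|Nb E z| by move=> S; apply: subset_leq_card; apply: subsetIl.
  have nz := Ncard z.
  case: bx hx => [/(_ isT) [y1 y1X y1N]|_]; case: bw hw => [/(_ isT) [y2 y2W y2N]|_] /=.
  - move: y1X y2W; rewrite !inE => /andP [y1H y1H'] /andP [y2H' y2H].
    have y1K : y1 \notin K by rewrite inE (negbTE y1H).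
    have y2K : y2 \notin y1 |: K.
      rewrite !inE negb_or (negbTE y2H') andbF andbT.
      by apply/eqP => e; move: y1H; rewrite -e y2H.
    have l1 := ltn_extra (subsetUr [set y1] K) (setU11 y1 K) y1K y1N.
    have l2 := ltn_extra (subsetUr [set y2] (y1 |: K)) (setU11 y2 _) y2K y2N.
    have g := gen (y2 |: (y1 |: K)); clear -g l1 l2 nz; lia.
  - move: y1X; rewrite !inE => /andP [y1H y1H'].
    have y1K : y1 \notin K by rewrite inE (negbTE y1H).
    have l1 := ltn_extra (subsetUr [set y1] K) (setU11 y1 K) y1K y1N.
    have g := gen (y1 |: K); clear -g l1 nz; lia.
  - move: y2W; rewrite !inE => /andP [y2H' y2H].
    have y2K : y2 \notin K by rewrite inE (negbTE y2H') andbF.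
    have l1 := ltn_extra (subsetUr [set y2] K) (setU11 y2 K) y2K y2N.
    have g := gen (y2 |: K); clear -g l1 nz; lia.
  - clear -cN nz; lia.
have sumU : \sum_(z in R) (u \in Nb E z) = 2.
  have -> : \sum_(z in R) (u \in Nb E z) = \sum_(z in R) (z \in Nb E u).
    by apply: eq_bigr => z _; rewrite N_sym.
  rewrite -card_sumI.
  have -> : R :&: Nb E u = Nb E u :\ v.
    apply/setP => t; rewrite in_setI !in_setD1.
    case tN: (t \in Nb E u); rewrite ?andbF ?andbT //.
    have tK : t \in K by rewrite in_setI (subsetP NuH _ tN) (subsetP NuH' _ tN).
    have tu : t != u by apply/eqP => tu; rewrite tu in tN; rewrite tN in uNu.
    by rewrite tK tu !andbT.
  have := cardsD1 v (Nb E u); rewrite vNu cu /= => h; clear -h; lia.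
have sumV : \sum_(z in R) (v \in Nb E z) = 2.
  have -> : \sum_(z in R) (v \in Nb E z) = \sum_(z in R) (z \in Nb E v).
    by apply: eq_bigr => z _; rewrite N_sym.
  rewrite -card_sumI.
  have -> : R :&: Nb E v = Nb E v :\ u.
    apply/setP => t; rewrite in_setI !in_setD1.
    case tN: (t \in Nb E v); rewrite ?andbF ?andbT //.
    have tK : t \in K by rewrite in_setI (subsetP NvH _ tN) (subsetP NvH' _ tN).
    have tv : t != v by apply/eqP => tv; rewrite tv in tN; rewrite tN in vNv.
    by rewrite tK tv andbT.
  have := cardsD1 u (Nb E v); rewrite uNv cv /= => h; clear -h; lia.
have sumA : \sum_(z in R) (z \in A) = #|A| by rewrite -card_sumI (setIidPr AR).
have sumB : \sum_(z in R) (z \in B) = #|B| by rewrite -card_sumI (setIidPr BR).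
have s1 : \sum_(z in R) ((u \in Nb E z) + (v \in Nb E z) + #|Nb E z :&: R| + (z \in A) + (z \in B))
    <= \sum_(z in R) 3.
  apply: leq_sum => z zR; apply: bound.
  - rewrite inE => /andP [zK /existsP [y /and3P [yH' yK yE]]].
    exists y; last by rewrite inE.
    rewrite in_setD yH' andbT; apply/negP => yH; move: yK; by rewrite in_setI yH yH'.
  - rewrite inE => /andP [zK /existsP [y /and3P [yH yK yE]]].
    exists y; last by rewrite inE.
    rewrite in_setD yH andbT; apply/negP => yH'; move: yK; by rewrite in_setI yH yH'.
move: s1; rewrite !big_split /= sumU sumV sumA sumB sum_nat_const => s1.
have cK2' : #|K :\ u| = 1 + #|R| by [].
have cR3 : #|R| = 3 by clear -s1 hA hB cK1 cK2' cK5; lia.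
have sr : \sum_(z in R) #|Nb E z :&: R| <= 1 by clear -s1 hA hB cR3; lia.
have r0 : forall z, z \in R -> #|Nb E z :&: R| = 0.
  move=> z zR; apply/eqP; rewrite -leqn0 leqNgt; apply/negP; rewrite card_gt0.
  move=> /set0Pn [y]; rewrite in_setI => /andP [yN yR].
  have zy : y != z by apply/eqP => e; subst y; move: (N_irr z sE); rewrite yN.
  have zN : z \in Nb E y :&: R by rewrite in_setI -N_sym yN zR.
  have ry : 0 < #|Nb E y :&: R| by rewrite card_gt0; apply/set0Pn; exists z.
  have rz : 0 < #|Nb E z :&: R| by rewrite card_gt0; apply/set0Pn; exists y; rewrite in_setI yN.
  have yRz : y \in R :\ z by rewrite in_setD1 zy yR.
  move: sr; rewrite (big_setD1 z zR) (big_setD1 y yRz) /= => sr.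
  clear -sr ry rz; lia.
have sr0 : \sum_(z in R) #|Nb E z :&: R| = 0 by apply: big1 => z zR; apply: r0.
have cK : #|K| = 5 by clear -cK1 cK2' cR3; lia.
have HK : H :\ w = K.
  apply/eqP; rewrite eq_sym eqEcard.
  have -> : K \subset H :\ w.
    apply/subsetP => t; rewrite in_setI in_setD1 => /andP [tH tH']; rewrite tH andbT.
    by apply/eqP => tw; rewrite -tw tH' in wH'.
  have := cardsD1 w H; rewrite wH cH /= => h; rewrite /=; clear -h cK; lia.
have H'K : H' :\ x = K.
  apply/eqP; rewrite eq_sym eqEcard.
  have -> : K \subset H' :\ x.
    apply/subsetP => t; rewrite in_setI in_setD1 => /andP [tH tH']; rewrite tH' andbT.
    by apply/eqP => tx; rewrite -tx tH in xH.
  have := cardsD1 x H'; rewrite xH' /= => h; have := Hle6 H' HH' => h6.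
  rewrite /=; clear -h h6 cK; lia.
have sumX : \sum_(z in R) (x \in Nb E z) = #|R :&: Nb E x|.
  rewrite card_sumI; by apply: eq_bigr => z _; rewrite N_sym.
have sumW : \sum_(z in R) (w \in Nb E z) = #|R :&: Nb E w|.
  rewrite card_sumI; by apply: eq_bigr => z _; rewrite N_sym.
have s2 : \sum_(z in R) ((u \in Nb E z) + (v \in Nb E z) + #|Nb E z :&: R| + (x \in Nb E z) + (w \in Nb E z))
    <= \sum_(z in R) 3.
  apply: leq_sum => z zR; apply: bound.
  - move=> xN; exists x => //; by rewrite in_setD xH' xH.
  - move=> wN; exists w => //; by rewrite in_setD wH wH'.
move: s2; rewrite !big_split /= sumU sumV sr0 sumX sumW sum_nat_const => s2.
have side : forall S o, S \in Hs -> S :\ o = K -> o \in S -> u \notin Nb E o ->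
    v \notin Nb E o -> #|R :&: Nb E o| <= 2 ->
    forall y, y \in S -> y != u -> y != v -> #|Nb E y :&: S| <= 2.
  move=> S o HS SK oS uo vo co.
  have dec : forall y, #|Nb E y :&: S| =
      (o \in Nb E y) + (u \in Nb E y) + (v \in Nb E y) + #|Nb E y :&: R|.
    by move=> y; rewrite (cardID1 _ oS) SK (cardID1 _ uK) (cardID1 _ vKu) !addnA.
  move=> y yS yu yv.
  case: (eqVneq y o) => [->|yo].
    rewrite dec (negbTE (N_irr o sE)) (negbTE uo) (negbTE vo) setIC /=.
    by [].
  have yK : y \in K by rewrite -SK in_setD1 yo yS.
  have yR : y \in R by rewrite !in_setD1 yv yu yK.
  rewrite leqNgt; apply/negP => big.
  have deg : forall z, z \in R -> 2 <= #|Nb E z :&: S|.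
    move=> z zR.
    have zS : z \in S.
      have : z \in K by move: zR; rewrite !in_setD1 => /andP [_ /andP [_ ->]].
      by rewrite -SK in_setD1 => /andP [].
    by have := deg2 (R1 S HS) zS; rewrite NS.
  have sumS : \sum_(z in R) #|Nb E z :&: S| = #|R :&: Nb E o| + 4.
    rewrite (eq_bigr _ (fun z _ => dec z)) !big_split /= sumU sumV sr0.
    have -> : \sum_(z in R) (o \in Nb E z) = #|R :&: Nb E o|.
      rewrite card_sumI; by apply: eq_bigr => z _; rewrite N_sym.
    by rewrite addn0 -addnA.
  have cRy : #|R :\ y| = 2 by have := cardsD1 y R; rewrite yR cR3 /= => h; clear -h; lia.
  have lower : #|Nb E y :&: S| + 4 <= \sum_(z in R) #|Nb E z :&: S|.
    rewrite (big_setD1 y yR) /= leq_add2l.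
    have <- : \sum_(z in R :\ y) 2 = 4 by rewrite sum_nat_const cRy.
    apply: leq_sum => z; rewrite in_setD1 => /andP [_ zR]; exact: deg z zR.
  clear -lower sumS co big; lia.
have uNw : u \notin Nb E w.
  by rewrite N_sym; apply/negP => /(subsetP NuH') h; rewrite h in wH'.
have vNw : v \notin Nb E w.
  by rewrite N_sym; apply/negP => /(subsetP NvH') h; rewrite h in wH'.
have uNx : u \notin Nb E x.
  by rewrite N_sym; apply/negP => /(subsetP NuH) h; rewrite h in xH.
have vNx : v \notin Nb E x.
  by rewrite N_sym; apply/negP => /(subsetP NvH) h; rewrite h in xH.
case: (leqP #|R :&: Nb E w| 2) => [hp | hp].
  apply: (good_contra sE red HH uH vH eE eF).
  exact: side H w HH HK wH uNw vNw hp.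
have hq : #|R :&: Nb E x| <= 2 by clear -hp s2 cR3; lia.
apply: (good_contra sE red HH' uH' vH' eE eF).
exact: side H' x HH' H'K xH' uNx vNx hq.
Qed.
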